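(* For each natural number $n\ge2$, $[S_n\ltimes\mathbb{T}^n,S_n\ltimes\mathbb{T}^n]=[S_n,S_n]\ltimes\mathbb{T}^n_1$, where $\mathbb{T}^n_1=\{t_{(\lambda_1,\dots,\lambda_n)}\in\mathbb{T}^n\mid\prod_{i=1}^n\lambda_i=1\}$.
   Context: $K$ is a field of characteristic zero. $\mathbb{T}^n=\{t_\lambda\mid\lambda=(\lambda_1,\dots,\lambda_n)\in(K^* )^n\}$ is the torus of automorphisms $t_\lambda:x_i\mapsto\lambda_ix_i,\ y_i\mapsto\lambda_i^{-1}y_i$ of the algebra $\mathbb{S}_n$ (generated by $x_i,y_i$ with $y_ix_i=1$ and $x_i,y_i$ commuting with $x_j,y_j$ for $i\ne j$), and $S_n$ is the symmetric group acting by automorphisms $x_i\mapsto x_{\sigma(i)},y_i\mapsto y_{\sigma(i)}$; in the group $S_n\ltimes\mathbb{T}^n$ they generate, $S_n$ acts on $\mathbb{T}^n$ by permuting the coordinates of $\lambda$. *)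

(* Defs.v *)
From HB Require Import structures.
From mathcomp Require Import all_boot all_order all_algebra all_fingroup.
Set Implicit Arguments. Unset Strict Implicit. Unset Printing Implicit Defensive.
Import GRing.Theory.
Local Open Scope ring_scope.

(* An element of S_n ⋉ T^n (inside the ambient monoid) is the automorphism
   t_lam ∘ sigma, recorded as the pair (lam, sigma). The torus part lives in
   {ffun 'I_n -> K}; membership in S_n ⋉ T^n requires all lam_i <> 0. *)
Record selt (K : fieldType) (n : nat) := SElt {
  tor : {ffun 'I_n -> K};
  sym : {perm 'I_n} }.

(* sigma ∘ t_mu ∘ sigma^{-1} = t_{mu ∘ sigma^{-1}} (sigma : x_i |-> x_{sigma i}).
   Hence (t_lam sigma)(t_mu tau) = t_{lam * (mu ∘ sigma^{-1})} (sigma ∘ tau).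
   In mathcomp, (tau * sigma)%g is the function sigma ∘ tau. *)
Definition smul (K : fieldType) (n : nat) (g h : selt K n) : selt K n :=
  SElt [ffun i => tor g i * tor h ((sym g)^-1%g i)] (sym h * sym g)%g.

Definition sinv (K : fieldType) (n : nat) (g : selt K n) : selt K n :=
  SElt [ffun i => (tor g (sym g i))^-1] (sym g)^-1%g.

Definition sone (K : fieldType) (n : nat) : selt K n :=
  SElt [ffun => 1] 1%g.

Definition in_SnTn (K : fieldType) (n : nat) (g : selt K n) : Prop :=
  forall i, tor g i != 0.

Definition scomm (K : fieldType) (n : nat) (g h : selt K n) : selt K n :=
  smul (smul (sinv g) (sinv h)) (smul g h).

Inductive in_derived (K : fieldType) (n : nat) : selt K n -> Prop :=
  | der_comm g h : in_SnTn g -> in_SnTn h -> in_derived (scomm g h)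
  | der_one : in_derived (sone K n)
  | der_mul g h : in_derived g -> in_derived h -> in_derived (smul g h)
  | der_inv g : in_derived g -> in_derived (sinv g).

Definition in_An_Tn1 (K : fieldType) (n : nat) (g : selt K n) : Prop :=
  in_SnTn g /\
  sym g \in ([~: [set: {perm 'I_n}], [set: {perm 'I_n}]])%g /\
  \prod_(i < n) tor g i = 1.

(* Main.v *)
Set Warnings "-notation-overridden,-ambiguous-paths".
Require Import Defs.
From mathcomp Require Import all_boot all_order all_algebra all_fingroup.
From mathcomp Require Import ring.
Import GRing.Theory.

Section Aux.
Variables (K : fieldType) (n : nat).
Local Open Scope ring_scope.

Lemma selt_eq (a b : selt K n) : tor a =1 tor b -> sym a = sym b -> a = b.
Proof. case: a => fa sa; case: b => fb sb /= /ffunP -> -> //. Qed.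

Lemma prod_smul (a b : selt K n) :
  \prod_i tor (smul a b) i = \prod_i tor a i * \prod_i tor b i.
Proof.
rewrite /smul /=. under eq_bigr do rewrite ffunE.
rewrite big_split /=.
by rewrite [X in _ = _ * X](reindex_inj (@perm_inj _ ((sym a)^-1)%g)).
Qed.

Lemma prod_sinv (a : selt K n) :
  \prod_i tor (sinv a) i = (\prod_i tor a i)^-1.
Proof.
rewrite /sinv /=. under eq_bigr do rewrite ffunE.
rewrite prodfV.
by rewrite [in RHS](reindex_inj (@perm_inj _ (sym a))).
Qed.

Lemma nz_smul (a b : selt K n) : in_SnTn a -> in_SnTn b -> in_SnTn (smul a b).
Proof. by move=> ha hb i; rewrite /smul /= ffunE mulf_neq0. Qed.

Lemma nz_sinv (a : selt K n) : in_SnTn a -> in_SnTn (sinv a).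
Proof. by move=> ha i; rewrite /sinv /= ffunE invr_neq0. Qed.

Lemma nz_prod (a : selt K n) : in_SnTn a -> \prod_i tor a i != 0.
Proof. by move=> ha; apply/prodf_neq0 => i _; apply: ha. Qed.

Definition e (s : {perm 'I_n}) : selt K n := SElt [ffun => 1] s.

Lemma e_der (s : {perm 'I_n}) :
  s \in ([~: [set: {perm 'I_n}], [set: {perm 'I_n}]])%g -> in_derived (e s).
Proof.
move=> /gen_prodgP [k [c Hc ->]].
elim: k c Hc => [|k IH] c Hc.
  rewrite big_ord0.
  have -> : e 1%g = sone K n by apply: selt_eq => //= i; rewrite !ffunE.
  exact: der_one.
rewrite big_ord_recr /=.
have -> : e ((\prod_(i < k) c (widen_ord (leqnSn k) i)) * c ord_max)%g
   = smul (e (c ord_max)) (e (\prod_(i < k) c (widen_ord (leqnSn k) i))%g).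
  by apply: selt_eq => //= i; rewrite !ffunE mulr1.
apply: der_mul; last by apply: IH => i; apply: Hc.
have /imset2P [x y _ _ ->] := Hc ord_max.
have -> : e [~ x, y]%g = scomm (e y^-1%g) (e x^-1%g).
  apply: selt_eq => /= [i|]; first by rewrite !ffunE !invr1 !mulr1.
  by rewrite /commg /conjg !invgK !mulgA.
by apply: der_comm => i; rewrite /= ffunE oner_neq0.
Qed.

End Aux.

Lemma torus_der (K : fieldType) (m : nat) (mu : {ffun 'I_m.+2 -> K}) :
  (forall i, mu i != 0%R) -> (\prod_i mu i = 1)%R -> in_derived (SElt mu 1%g).
Proof.
move=> nz pm.
pose tau := perm (@ordS_inj m.+2).
pose lam := [ffun i : 'I_m.+2 => (\prod_(j < m.+2 | (j < i)%N) mu j)%R].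
have nzl : forall i, lam i != 0%R.
  by move=> i; rewrite ffunE; apply/prodf_neq0 => j _.
have -> : SElt mu 1%g = scomm (SElt lam 1%g) (SElt [ffun=> 1%R] tau).
  apply: selt_eq => /= [i|]; last by rewrite !(mul1g, mulg1, invg1) mulgV.
  rewrite !ffunE /= perm1 !invg1 mulg1 invgK permE invr1 !mulr1.
  have nzF : forall k : nat, (\prod_(j < m.+2 | (j < k)%N) mu j)%R != 0%R.
    by move=> k; apply/prodf_neq0 => j _.
  case: (ltnP i.+1 m.+2) => hi.
    have -> : (ordS i : nat) = i.+1 by rewrite /= modn_small.
    rewrite [X in (_ * X)%R](bigD1 i) /=; last by rewrite ltnSn.
    rewrite [X in (_ * (_ * X))%R](eq_bigl (fun j : 'I_m.+2 => (j < i)%N)); last first.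
      by move=> j; rewrite ltnS andbC -ltn_neqAle.
    by rewrite mulrCA mulVf ?mulr1.
  have ei : i.+1 = m.+2 by apply/eqP; rewrite eqn_leq hi ltn_ord.
  have -> : (ordS i : nat) = 0%N by rewrite /= ei modnn.
  rewrite [X in (_ * X)%R]big_pred0 // mulr1.
  move: pm; rewrite (bigD1 i) //=.
  rewrite (eq_bigl (fun j : 'I_m.+2 => (j < i)%N)); last first.
    move=> j; rewrite ltn_neqAle.
    have : (j < i.+1)%N by rewrite ei ltn_ord.
    by rewrite ltnS => ->; rewrite andbT.
  move=> pm; apply: (mulIf (nzF i)).
  by rewrite pm mulVf ?nzF.
apply: der_comm => i; rewrite /= ?ffunE ?oner_neq0 //; apply/prodf_neq0 => j _; exact: nz.
Qed.
Local Open Scope ring_scope.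

Theorem lemma5p3 (K : fieldType) (charK0 : [pchar K]%R =i pred0) (n : nat)
  (hn : (2 <= n)%N) (g : selt K n) :
  in_derived g <-> in_An_Tn1 g.
Proof.
split.
- elim => {g} [a b ha hb| |a b _ [na [sa pa]] _ [nb [sb pb]]|a _ [na [sa pa]]].
  + split; first by rewrite /scomm; apply: nz_smul; apply: nz_smul;
      try apply: nz_sinv.
    split.
      rewrite /scomm /=.
      have -> : ((sym b * sym a) * ((sym b)^-1 * (sym a)^-1))%g
              = [~ (sym b)^-1, (sym a)^-1]%g.
        by rewrite /commg /conjg !invgK !mulgA.
      by apply: mem_commg; rewrite inE.
    rewrite /scomm !prod_smul !prod_sinv.
    have := @nz_prod _ _ a ha; have := @nz_prod _ _ b hb.
    move: (\prod_i tor a i) (\prod_i tor b i) => x y hy hx.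
    by rewrite mulrACA !mulVf ?mulr1.
  + split; first by move=> i; rewrite /= ffunE oner_neq0.
    split; first exact: group1.
    by apply: big1 => i _; rewrite /= ffunE.
  + split; first exact: nz_smul.
    split; first by rewrite /= groupM.
    by rewrite prod_smul pa pb mulr1.
  + split; first exact: nz_sinv.
    split; first by rewrite /= groupV.
    by rewrite prod_sinv pa invr1.
- case=> [ng [sg pg]].
  have -> : g = smul (SElt (tor g) 1%g) (e K n (sym g)).
    by apply: selt_eq => /= [i|]; rewrite ?ffunE ?mulr1 ?mulg1.
  apply: der_mul; last exact: e_der.
  case: n hn g ng sg pg => [|[|m]] // _ g ng _ pg.
  exact: torus_der.
Qed.
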